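(* Let $a>0$, $c>0$, and consider the four-dimensional system in the variables $x,y,z,b$ $$\dot x=x(1-y+cx-axz),\qquad \dot y=y(-1+x),\qquad \dot z=z(-b+ax^2),\qquad \dot b=0,$$ considered for $b>0$. If $f=f(x,y,z,b)$ is a formal first integral of this system, then $f$ is an arbitrary formal power series in the variable $b$ alone.
   Context: A formal first integral of this system is a formal power series $f\in\mathbb{C}[[x,y,z,b]]$ annihilated by the vector field $x(1-y+cx-axz)\partial_x+y(-1+x)\partial_y+z(-b+ax^2)\partial_z$ (with $\dot b=0$). *)

(* Defs.v *)
From mathcomp Require Import all_boot all_order all_algebra.
From mathcomp Require Import reals complex.
Set Implicit Arguments. Unset Strict Implicit. Unset Printing Implicit Defensive.
Import GRing.Theory Num.Theory.
Local Open Scope ring_scope.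

(* A formal power series in C[[x,y,z,b]], given by its coefficient family:
   f i j k l is the coefficient of x^i y^j z^k b^l. *)
Definition fps (C : Type) := nat -> nat -> nat -> nat -> C.

Section FPS.
Variable C : comRingType.

Definition mulmono (p q r s : nat) (f : fps C) : fps C :=
  fun i j k l =>
    if [&& (p <= i)%N, (q <= j)%N, (r <= k)%N & (s <= l)%N]
    then f (i - p)%N (j - q)%N (k - r)%N (l - s)%N else 0.

Definition dX (f : fps C) : fps C := fun i j k l => (i.+1)%:R * f i.+1 j k l.
Definition dY (f : fps C) : fps C := fun i j k l => (j.+1)%:R * f i j.+1 k l.
Definition dZ (f : fps C) : fps C := fun i j k l => (k.+1)%:R * f i j k.+1 l.

(* The vector field
   x(1-y+cx-axz) d/dx + y(-1+x) d/dy + z(-b+ax^2) d/dz   (and d/db coefficient 0)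
   acting as a derivation on C[[x,y,z,b]]. *)
Definition vfield (a c : C) (f : fps C) : fps C :=
  fun i j k l =>
      (mulmono 1 0 0 0 (dX f) i j k l
     - mulmono 1 1 0 0 (dX f) i j k l
     + c * mulmono 2 0 0 0 (dX f) i j k l
     - a * mulmono 2 0 1 0 (dX f) i j k l)
    + (- mulmono 0 1 0 0 (dY f) i j k l
       + mulmono 1 1 0 0 (dY f) i j k l)
    + (- mulmono 0 0 1 1 (dZ f) i j k l
       + a * mulmono 2 0 1 0 (dZ f) i j k l).

Definition formal_first_integral (a c : C) (f : fps C) : Prop :=
  forall i j k l, vfield a c f i j k l = 0.

Definition series_in_b_only (f : fps C) : Prop :=
  forall i j k l, (i, j, k) != (0%N, 0%N, 0%N) -> f i j k l = 0.
End FPS.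

(* Main.v *)
Require Import Defs.
From mathcomp Require Import all_boot all_order all_algebra.
From mathcomp Require Import reals complex.
From mathcomp Require Import ring zify.
Import GRing.Theory Num.Theory.
Local Open Scope ring_scope.

Section Core.
Variable C : numFieldType.

Definition E2 (c K : C) (u : nat -> nat -> C) (i j : nat) : C :=
  (i%:R - j%:R) * u i j
  - (match j with 0 => 0 | j'.+1 => i%:R * u i j' end)
  + (match i with 0 => 0 | i'.+1 => (c * i'%:R + j%:R) * u i' j end)
  + (match i with i''.+2 => K * u i'' j | _ => 0 end).

Variables (c K : C) (u : nat -> nat -> C).
Hypothesis hc : c != 0.
Hypothesis HE : forall i j, E2 c K u i j = 0.
Hypothesis H0 : K * u 0 0 = 0.

Lemma shifted_zero n i j :
  (forall i j, (i + j < n)%N -> (i, j) != (0%N, 0%N) -> u i j = 0) ->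
  (i + j = n)%N ->
  (i%:R - j%:R) * u i j = 0.
Proof.
move=> IH hn; have := HE i j; rewrite /E2.
have -> : (match j with 0 => 0 | j'.+1 => i%:R * u i j' end) = 0.
  case: j hn => [|j] hn //; case: i hn => [|i] hn; first by rewrite mul0r.
  by rewrite IH ?mulr0 //; lia.
have -> : (match i with 0 => 0 | i'.+1 => (c * i'%:R + j%:R) * u i' j end) = 0.
  case: i hn => [|i] hn //; case: i hn => [|i] hn; case: j hn => [|j] hn.
  - by rewrite mulr0 addr0 mul0r.
  - by rewrite IH ?mulr0 //; lia.
  - by rewrite IH ?mulr0 //; lia.
  - by rewrite IH ?mulr0 //; lia.
have -> : (match i with i''.+2 => K * u i'' j | _ => 0 end) = 0.
  case: i hn => [|[|i]] hn //; case: i hn => [|i] hn; case: j hn => [|j] hn //.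
  - by rewrite IH ?mulr0 //; lia.
  - by rewrite IH ?mulr0 //; lia.
  - by rewrite IH ?mulr0 //; lia.
by rewrite subr0 !addr0.
Qed.

Lemma nonres n i j :
  (forall i j, (i + j < n)%N -> (i, j) != (0%N, 0%N) -> u i j = 0) ->
  (i + j = n)%N -> i != j -> u i j = 0.
Proof.
move=> IH hn hij; have /eqP := shifted_zero _ _ _ IH hn.
rewrite mulf_eq0 => /orP[|/eqP//]; rewrite subr_eq0 eqr_nat => /eqP h.
by rewrite h eqxx in hij.
Qed.

Lemma step n :
  (forall i j, (i + j < n)%N -> (i, j) != (0%N, 0%N) -> u i j = 0) ->
  forall i j, (i + j = n)%N -> (i, j) != (0%N, 0%N) -> u i j = 0.
Proof.
move=> IH i j hn hnz.
case: (eqVneq i j) => [eij|]; last exact: nonres _ _ _ IH hn.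
subst j.
case: i hn hnz => [|m] hn hnz; first by rewrite eqxx in hnz.
(* resonant case i = j = m.+1 *)

have IH2 : forall i j, (i + j <= n)%N -> (i, j) != (0%N, 0%N) -> i != j -> u i j = 0.
  move=> i j; rewrite leq_eqVlt => /orP[/eqP h|h] nz ij.
  - exact: nonres _ _ _ IH h ij.
  - exact: IH.
have z1 : u m.+2 m = 0.
 apply: IH2 => //.
- lia.
- lia.
have z2 : u m m.+1 = 0.
 apply: IH; [lia | by rewrite xpair_eqE andbF].
have z3 : u m m.+2 = 0.
 apply: IH2; [lia | by rewrite xpair_eqE andbF | lia].
have e1 := HE m.+2 m.+1; rewrite /E2 z1 z2 in e1.
have e2 := HE m.+1 m.+2; rewrite /E2 z3 in e2.
have e3 := HE m.+2 m.+2; rewrite /E2 z3 in e3.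
have e4 : (match m with 0%N => 0 | i''.+1 => K * u i'' m.+2 end) = 0.
  move: hn {hnz IH2 z1 z2 z3 e1 e2 e3}; case: m => [|m'] hn //.
  rewrite IH; [by rewrite mulr0 | lia | by rewrite xpair_eqE andbF].
rewrite e4 in e2.
rewrite !mulr0 ?subr0 ?addr0 in e1 e2 e3.
have key : m.+1%:R * c * u m.+1 m.+1 =
   ((m.+2%:R - m.+2%:R) * u m.+2 m.+2 - m.+2%:R * u m.+2 m.+1 +
    (c * m.+1%:R + m.+2%:R) * u m.+1 m.+2)
   + m.+2%:R * ((m.+2%:R - m.+1%:R) * u m.+2 m.+1 +
    (c * m.+1%:R + m.+1%:R) * u m.+1 m.+1)
   + (c * m.+1%:R + m.+2%:R) * ((m.+1%:R - m.+2%:R) * u m.+1 m.+2 - m.+1%:R * u m.+1 m.+1).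

  ring.
move: key; rewrite e1 e2 e3 !mulr0 !addr0 => /eqP.
by rewrite !mulf_eq0 pnatr_eq0 (negbTE hc) /= => /eqP.
Qed.


Lemma core : forall i j, (i, j) != (0%N, 0%N) -> u i j = 0.
Proof.
suff H : forall n i j, (i + j < n)%N -> (i, j) != (0%N, 0%N) -> u i j = 0.
  by move=> i j; apply: (H (i + j).+1).
elim=> [|n IHn] i j; first by [].
rewrite ltnS leq_eqVlt => /orP[/eqP h|h]; last exact: IHn.
exact: step _ IHn i j h.
Qed.

End Core.
Arguments E2 {C}.
Arguments core {C} c K u.

Section Main.
Variable C : numFieldType.

Definition T1 (f : fps C) i j k l : C :=
  match i, k with i'.+2, k'.+1 => i'.+1%:R * f i'.+1 j k' l | _, _ => 0 end.
Definition T2 (f : fps C) i j k l : C :=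
  match k, l with k'.+1, l'.+1 => k'.+1%:R * f i j k'.+1 l' | _, _ => 0 end.

Lemma vf_decomp (a c : C) f i j k l :
  vfield a c f i j k l =
  E2 c (a * k%:R) (fun i j => f i j k l) i j - a * T1 f i j k l - T2 f i j k l.
Proof.
case: i => [|[|i]]; case: j => [|j]; case: k => [|k]; case: l => [|l];
rewrite /vfield /mulmono /dX /dY /dZ /E2 /T1 /T2 /= ?subSS ?subn0 ?subnn; ring.
Qed.

Lemma mm0 p q r s (g : fps C) i j k l :
  (forall i j k l, g i j k l = 0) -> mulmono p q r s g i j k l = 0.
Proof. by move=> hg; rewrite /mulmono; case: ifP. Qed.

Lemma backward (a c : C) f : series_in_b_only f -> formal_first_integral a c f.
Proof.
move=> H i j k l.
have hX : forall i j k l, dX f i j k l = 0.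
  by move=> i' j' k' l'; rewrite /dX H ?mulr0.
have hY : forall i j k l, dY f i j k l = 0.
  by move=> i' j' k' l'; rewrite /dY H ?mulr0 // !xpair_eqE /= andbF.
have hZ : forall i j k l, dZ f i j k l = 0.
  by move=> i' j' k' l'; rewrite /dZ H ?mulr0 // !xpair_eqE /= andbF.
by rewrite /vfield !mm0 // !(mulr0, oppr0, addr0, subr0).
Qed.

Lemma forward (a c : C) (hc : c != 0) f :
  formal_first_integral a c f -> series_in_b_only f.
Proof.
move=> H.
suff P : forall k l i j, (i, j, k) != (0%N, 0%N, 0%N) -> f i j k l = 0.
  by move=> i j k l; apply: P.
elim=> [|k IHk] l.
  move=> i j nz.
  apply: (core c (a * 0%:R) (fun i j => f i j 0%N l) hc); last first.
    by move: nz; rewrite !xpair_eqE andbT.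
    by rewrite mulr0 mul0r.
  move=> i' j'; have := H i' j' 0%N l; rewrite vf_decomp.
  have -> : T1 f i' j' 0 l = 0 by case: i' => [|[|i']].
  have -> : T2 f i' j' 0 l = 0 by [].
  by rewrite mulr0 !subr0.
have gen : forall l, (forall i j, T2 f i j k.+1 l = 0) -> forall i j, f i j k.+1 l = 0.
  move=> l' hT2.
  have hT1 : forall i j, T1 f i j k.+1 l' = 0.
    case=> [|[|i']] j //=; by rewrite IHk ?mulr0.
  have HE : forall i j, E2 c (a * k.+1%:R) (fun i j => f i j k.+1 l') i j = 0.
    by move=> i j; have := H i j k.+1 l'; rewrite vf_decomp hT1 hT2 mulr0 !subr0.
  have h00 : f 0%N 0%N k.+1 l' = 0.
    have := H 0%N 0%N k.+1 l'.+1; rewrite vf_decomp /E2 /T1 /T2 /=.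
    rewrite subrr mul0r mulr0 !subr0 !addr0 sub0r => /eqP.
    by rewrite oppr_eq0 mulf_eq0 pnatr_eq0 /= => /eqP.
  move=> i j; case: (eqVneq (i, j) (0%N, 0%N)) => [[-> ->] //|nz].
  apply: (core c (a * k.+1%:R) (fun i j => f i j k.+1 l') hc HE) => //.
  by rewrite /= h00 mulr0.
move=> i j _; elim: l i j => [|l IHl] i j; first by apply: gen.
by apply: gen => i' j'; rewrite /T2 IHl ?mulr0.
Qed.
End Main.

Theorem theorem1p7 (R : realType) (a c : R) (ha : 0 < a) (hc : 0 < c)
    (f : fps R[i]) :
  formal_first_integral (a%:C)%C (c%:C)%C f <-> series_in_b_only f.
Proof.
have hc' : (c%:C)%C != 0 :> R[i].
  apply/eqP => h; have h2 : c = 0 := @complexI R c 0 h.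
  by move: hc; rewrite h2 Order.POrderTheory.ltxx.
split; [exact: forward | exact: backward].
Qed.
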